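(* Let $\alpha\in(0,1)$ be irrational, let $s_\alpha$ be a Sturmian word of angle $\alpha$, and let $n$ be a positive even integer. For $0\le i\le n$, let $t_i$ be the factor of length $n$ associated with the interval $L_i(n)$. Then $t_i$ is an abelian square if and only if either $\lfloor n\alpha\rfloor$ is even and $L_i(n)\subset[0,\{-n\alpha\})$, or $\lfloor n\alpha\rfloor$ is odd and $L_i(n)\subset[\{-n\alpha\},1)$.
   Context: Alphabet $\{a,b\}$; $\{x\}=x-\lfloor x\rfloor$ is the fractional part. For irrational $\alpha\in(0,1)$ and $\rho\in[0,1)$, the Sturmian word $s_{\alpha,\rho}=c_0c_1c_2\cdots$ is defined by $c_m=b$ if $\{\rho+m\alpha\}\in[0,1-\alpha)$ and $c_m=a$ otherwise (or with the intervals $(0,1-\alpha]$ and $(1-\alpha,1]$ instead); all such words have the same set of factors, and $s_\alpha$ denotes any of them. For $i\ge 0$ let $I_b^{-i}=[\{-i\alpha\},\{-(i+1)\alpha\})$, understood circularly on $[0,1)$ (if the left endpoint exceeds the right one it means $[\{-i\alpha\},1)\cup[0,\{-(i+1)\alpha\})$). For $x\in[0,1)$ let $u_n(x)=d_0\cdots d_{n-1}$ with $d_i=b$ if $x\in I_b^{-i}$ and $d_i=a$ otherwise; the factor of $s_{\alpha,\rho}$ of length $n$ at position $j$ is $u_n(\{\rho+j\alpha\})$. Arranging the $n+2$ points $0,1,\{-\alpha\},\dots,\{-n\alpha\}$ in increasing order partitions $[0,1)$ into $n+1$ half-open intervals $L_0(n),\dots,L_n(n)$ (in increasing order); $u_n$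 is constant on each $L_i(n)$, and its value there is the factor $t_i$ associated with $L_i(n)$; these are exactly the $n+1$ distinct factors of length $n$. An abelian square is a word $v_1v_2$ where $v_1,v_2$ have the same numbers of $a$'s and of $b$'s. *)

(* Defs.v *)
From mathcomp Require Import all_boot all_order all_algebra.
From mathcomp Require Import reals.
Set Implicit Arguments. Unset Strict Implicit. Unset Printing Implicit Defensive.
Import Order.TTheory GRing.Theory Num.Theory.
Local Open Scope ring_scope.

Definition letter := bool.
Definition la : letter := false.
Definition lb : letter := true.

Section Sturm.
Variable R : realType.

Definition fracp (x : R) : R := x - (Num.floor x)%:~R.

(* x in I_b^{-i} = [{-i alpha}, {-(i+1) alpha}), understood circularly *)
Definition in_Ib (alpha : R) (i : nat) (x : R) : bool :=
  let l := fracp (- (i%:R * alpha)) in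
  let r := fracp (- (i.+1%:R * alpha)) in
  if l <= r then (l <= x) && (x < r) else (l <= x) || (x < r).

Definition u_n (alpha : R) (n : nat) (x : R) : seq letter :=
  mkseq (fun i => if in_Ib alpha i x then lb else la) n.

Definition pt (alpha : R) (k : nat) : R := fracp (- (k%:R * alpha)).

Definition rank_below (alpha : R) (n : nat) (x : R) : nat :=
  count (fun k => pt alpha k < x) (iota 0 n.+1).

(* [a, b) is the interval L_i(n): a is the (i+1)-th smallest of the points
   0, {-alpha}, ..., {-n alpha}, and b is the next one, or 1 if i = n. *)
Definition is_L (alpha : R) (n i : nat) (a b : R) : Prop :=
  (exists2 k, (k <= n)%N & a = pt alpha k /\ rank_below alpha n a = i) /\
  (if i == n then b = 1
   else exists2 k, (k <= n)%N & b = pt alpha k /\ rank_below alpha n b = i.+1).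

End Sturm.

Definition abelian_square (w : seq letter) : Prop :=
  exists v1 v2, w = v1 ++ v2 /\
    count_mem la v1 = count_mem la v2 /\ count_mem lb v1 = count_mem lb v2.

(* Main.v *)
Require Import Defs.
From mathcomp Require Import all_boot all_order all_algebra.
From mathcomp Require Import reals.
From mathcomp Require Import lra zify.
Import Order.TTheory GRing.Theory Num.Theory.
Local Open Scope ring_scope.

Section S.
Variable R : realType.

Lemma flE (y r : R) (k : int) : r = k%:~R -> r <= y -> y < r + 1 -> Num.floor y = k.
Proof. move=> -> h1 h2; apply: floor_def; rewrite intrD /=; apply/andP; split=> //. Qed.

Lemma fl_bounds (y : R) : (Num.floor y)%:~R <= y /\ y < (Num.floor y)%:~R + 1.
Proof. have /andP[h1 h2] := floor_itv y; split=> //; by rewrite intrD in h2. Qed.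

Lemma in_IbE (alpha x : R) (i : nat) : 0 < alpha < 1 -> 0 <= x < 1 ->
  in_Ib alpha i x = (Num.floor (x + i.+1%:R * alpha) == Num.floor (x + i%:R * alpha)).
Proof.
move=> /andP[a0 a1] /andP[x0 x1].
rewrite /in_Ib /fracp.
set u := - (i%:R * alpha).
have -> : - (i.+1%:R * alpha) = u - alpha by rewrite /u -addn1 natrD mulrDl mul1r opprD.
have -> : x + i.+1%:R * alpha = x - u + alpha by rewrite /u -addn1 natrD mulrDl mul1r opprK addrA.
have -> : x + i%:R * alpha = x - u by rewrite /u opprK.
set c := Num.floor u.
have [c1 c2] := fl_bounds u; rewrite -/c in c1 c2.
have [la|la] := leP alpha (u - c%:~R).
- have -> : Num.floor (u - alpha) = c by apply: flE; [reflexivity|lra|lra].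
  rewrite ifF; last by apply/negbTE; rewrite -ltNge; lra.
  have [xl|xl] := leP (u - c%:~R) x.
  + have -> : Num.floor (x - u) = - c by apply: flE; [by rewrite intrN|lra|lra].
    have -> : Num.floor (x - u + alpha) = - c by apply: flE; [by rewrite intrN|lra|lra].
    by rewrite eqxx.
  + have -> : Num.floor (x - u) = - c - 1 by apply: flE; [by rewrite intrB intrN|lra|lra].
    have [xl2|xl2] := ltP x (u - alpha - c%:~R).
    * have -> : Num.floor (x - u + alpha) = - c - 1 by apply: flE; [by rewrite intrB intrN|lra|lra].
      by rewrite eqxx orbT.
    * have -> : Num.floor (x - u + alpha) = - c by apply: flE; [by rewrite intrN|lra|lra].
      apply/esym/negbTE; lia.
- have -> : Num.floor (u - alpha) = c - 1 by apply: flE; [by rewrite intrB|lra|lra].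
  rewrite ifT; last by rewrite intrB; lra.
  rewrite intrB.
  have [xl|xl] := leP (u - c%:~R) x.
  + have [xl2|xl2] := ltP x (u - alpha - (c%:~R - 1)).
    * have -> : Num.floor (x - u) = - c by apply: flE; [by rewrite intrN|lra|lra].
      have -> : Num.floor (x - u + alpha) = - c by apply: flE; [by rewrite intrN|lra|lra].
      by rewrite eqxx.
    * have -> : Num.floor (x - u) = - c by apply: flE; [by rewrite intrN|lra|lra].
      have -> : Num.floor (x - u + alpha) = - c + 1 by apply: flE; [by rewrite intrD intrN|lra|lra].
      apply/esym/negbTE; lia.
  + have -> : Num.floor (x - u) = - c - 1 by apply: flE; [by rewrite intrB intrN|lra|lra].
    have -> : Num.floor (x - u + alpha) = - c by apply: flE; [by rewrite intrN|lra|lra].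
    apply/esym/negbTE; lia.
Qed.

Lemma count_un (alpha x : R) (k : nat) : 0 < alpha < 1 -> 0 <= x < 1 ->
  (count_mem la (mkseq (fun i => if in_Ib alpha i x then lb else la) k))%:Z
  = Num.floor (x + k%:R * alpha).
Proof.
move=> ha hx; have /andP[a0 a1] := ha; have /andP[x0 x1] := hx.
elim: k => [|k IH].
  rewrite /= mul0r addr0; apply/esym; apply: (@flE _ 0) => //; lra.
rewrite /mkseq -addn1 iotaD map_cat count_cat /= -/(mkseq _ k) PoszD IH addn0.
rewrite addn1 in_IbE //.
set y := x + k%:R * alpha.
have -> : x + k.+1%:R * alpha = y + alpha by rewrite /y -addn1 natrD mulrDl mul1r addrA.
have [c1 c2] := fl_bounds y.
have [d1 d2] := fl_bounds (y + alpha).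
have e1 : Num.floor y <= Num.floor (y + alpha) by apply: le_floor; lra.
have e2 : Num.floor (y + alpha) < Num.floor y + 2.
  rewrite floor_lt_int intrD; lra.
have [E|E] := eqVneq (Num.floor (y + alpha)) (Num.floor y).
  by rewrite E /= addr0.
rewrite /=; lia.
Qed.

Lemma cnt_size (v : seq letter) : (count_mem la v + count_mem lb v = size v)%N.
Proof. by elim: v => //= -[] v IH /=; rewrite -IH; lia. Qed.

Lemma abelian_squareE (w : seq letter) (m : nat) : size w = (m + m)%N ->
  abelian_square w <-> count_mem la w = (count_mem la (take m w) + count_mem la (take m w))%N.
Proof.
move=> sw; split.
- move=> [v1 [v2 [Ew [e1 e2]]]]; rewrite Ew in sw *.
  have s1 := cnt_size v1; have s2 := cnt_size v2.
  have sv : size v1 = m by move: sw; rewrite size_cat; lia.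
  by rewrite take_size_cat // count_cat e1.
- move=> h; exists (take m w), (drop m w); rewrite cat_take_drop; split=> //.
  have hc := count_cat (pred1 la) (take m w) (drop m w); rewrite cat_take_drop in hc.
  have s1 := cnt_size (take m w); have s2 := cnt_size (drop m w).
  rewrite size_take size_drop sw in s1 s2.
  have : (m < m + m)%N || (m == m + m)%N by lia.
  case/orP=> [hm|/eqP hm].
    rewrite hm in s1; split; lia.
  have m0 : m = 0%N by lia.
  rewrite m0 /= in s1 s2 *; split; lia.
Qed.

Lemma irr_n (alpha : R) (n : nat) (z : int) : @reals.irrational R alpha -> (0 < n)%N ->
  n%:R * alpha != z%:~R.
Proof.
move=> hi hn; apply/eqP => e; apply: hi; apply/rationalP; exists z, n.
by rewrite -e mulrAC divff ?mul1r // pnatr_eq0 -lt0n.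
Qed.

Lemma arith (alpha x : R) (m : nat) : 0 < alpha < 1 -> @reals.irrational R alpha ->
  (0 < m)%N -> 0 <= x < 1 ->
  (Num.floor (x + (m + m)%N%:R * alpha) =
     Num.floor (x + m%:R * alpha) + Num.floor (x + m%:R * alpha)) <->
  ((~~ odd `|Num.floor ((m + m)%N%:R * alpha)|%N /\ x < fracp (- ((m + m)%N%:R * alpha)))
   \/ (odd `|Num.floor ((m + m)%N%:R * alpha)|%N /\ fracp (- ((m + m)%N%:R * alpha)) <= x)).
Proof.
move=> /andP[a0 a1] hi hm /andP[x0 x1].
have hmm : (0 < m + m)%N by lia.
rewrite natrD mulrDl /fracp.
set s := m%:R * alpha.
have s0 : 0 <= s by rewrite /s; apply: mulr_ge0; [exact: ler0n| lra].
have [N hN] : exists N : nat, Num.floor s = N%:Z.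
  by exists `|Num.floor s|%N; rewrite gez0_abs // floor_ge0.
have [c1 c2] := fl_bounds s; rewrite hN in c1 c2.
have eN : ((N + N)%N%:Z)%:~R = (N%:Z)%:~R + (N%:Z)%:~R :> R by rewrite PoszD intrD.
have i1 := @irr_n alpha _ ((N + N)%N%:Z) hi hmm.
rewrite natrD mulrDl eN in i1.
have i2 := @irr_n alpha _ ((N + N)%N%:Z + 1) hi hmm.
rewrite natrD mulrDl intrD eN /= in i2.
rewrite -/s -[1%:~R]/(1:R) in i1 i2.
have [lt|gt] := ltP (s + s) ((N%:Z)%:~R + (N%:Z)%:~R + 1).
- have F : Num.floor (s + s) = (N + N)%N%:Z by apply: flE; [by rewrite eN|lra|lra].
  have G : Num.floor (- (s + s)) = - (N + N)%N%:Z - 1.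
    apply: flE; [by rewrite intrB intrN eN|idtac|idtac].
    + lra.
    + have : s + s != (N%:Z)%:~R + (N%:Z)%:~R by exact: i1.
      rewrite neq_lt => /orP[h|h]; lra.
  rewrite F G intrB intrN eN /= addnn odd_double /= -[1%:~R]/(1:R).
  have [xp|xp] := ltP x (- (s + s) - (- ((N%:Z)%:~R + (N%:Z)%:~R) - 1)).
  + have -> : Num.floor (x + (s + s)) = (N + N)%N%:Z by apply: flE; [by rewrite eN|lra|lra].
    have -> : Num.floor (x + s) = N%:Z by apply: flE; [by []|lra|lra].
    split=> // _; left; split=> //.
  + have -> : Num.floor (x + (s + s)) = (N + N)%N%:Z + 1 by apply: flE; [by rewrite intrD eN|lra|lra].
    split; last by case=> [[_ //]|[//]].
    move=> h; exfalso; move: h; move: (Num.floor (x + s)) => A; clear; lia.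
- have gt' : (N%:Z)%:~R + (N%:Z)%:~R + 1 < s + s.
    by rewrite lt_neqAle gt andbT eq_sym.
  have F : Num.floor (s + s) = (N + N)%N%:Z + 1 by apply: flE; [by rewrite intrD eN|lra|lra].
  have G : Num.floor (- (s + s)) = - (N + N)%N%:Z - 2.
    by apply: flE; [by rewrite intrB intrN eN|lra|lra].
  rewrite F G intrB intrN eN /= -[2%:~R]/(2:R).
  rewrite addn1 /= addnn odd_double /=.
  have [xp|xp] := ltP x (- (s + s) - (- ((N%:Z)%:~R + (N%:Z)%:~R) - 2)).
  + have -> : Num.floor (x + (s + s)) = (N + N)%N%:Z + 1 by apply: flE; [by rewrite intrD eN|lra|lra].
    split; last by case=> [[//]|[_ //]].
    move=> h; exfalso; move: h; move: (Num.floor (x + s)) => A; clear; lia.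
  + have -> : Num.floor (x + (s + s)) = (N + N)%N%:Z + 2 by apply: flE; [by rewrite intrD eN|lra|lra].
    have -> : Num.floor (x + s) = N%:Z + 1 by apply: flE; [by rewrite intrD|lra|lra].
    split=> // _; [by right | clear; lia].
Qed.

Lemma fracp_itv (y : R) : 0 <= fracp y < 1.
Proof. have [h1 h2] := fl_bounds y; rewrite /fracp; apply/andP; split; lra. Qed.

Lemma cnt3 (P Q1 Q2 Q3 : pred nat) (s : seq nat) :
  (forall j, Q1 j + Q2 j + Q3 j <= P j)%N ->
  (count Q1 s + count Q2 s + count Q3 s <= count P s)%N.
Proof.
move=> h; elim: s => //= j s IH; have := h j; lia.
Qed.

Lemma no_between (alpha : R) (n i : nat) (a b : R) : is_L alpha n i a b -> a < b ->
  forall k, (k <= n)%N -> pt alpha k <= a \/ b <= pt alpha k.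
Proof.
move=> [[k0 hk0 [Ea Ra]] Hb] hab k hk.
have [h1|h1] := leP (pt alpha k) a; first by left.
have [h2|h2] := leP b (pt alpha k); first by right.
exfalso.
have C := @cnt3 (fun j => pt alpha j < b) (fun j => pt alpha j < a) (pred1 k0) (pred1 k)
   (iota 0 n.+1).
have /C : forall j, ((pt alpha j < a)%R + (j == k0) + (j == k) <= (pt alpha j < b)%R)%N.
  move=> j.
  have [->|nk0] := eqVneq j k0.
    have nk : (k0 == k) = false by apply/negbTE/eqP => e; rewrite -e -Ea in h1; lra.
    by rewrite nk -Ea ltxx hab.
  have [->|nk] := eqVneq j k.
    have -> : (pt alpha k < a) = false by apply/negbTE; rewrite -leNgt; lra.
    by rewrite h2.
  case: (ltP (pt alpha j) a) => h //=.
  by rewrite (lt_trans h hab).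
rewrite -/(rank_below alpha n a) -/(rank_below alpha n b) Ra.
rewrite !count_uniq_mem ?iota_uniq // !mem_iota /=.
have -> : (k0 < n.+1)%N by lia.
have -> : (k < n.+1)%N by lia.
move=> hh.
move: Hb; case: eqP => [En Eb|_ [k1 _ [_ Rb]]].
  have : (rank_below alpha n b <= n.+1)%N.
    by rewrite /rank_below -[X in (_ <= X)%N](size_iota 0 n.+1) count_size.
  lia.
lia.
Qed.
End S.

Theorem proposition4 (R : realType) (alpha : R) (n : nat)
  (Halpha : 0 < alpha < 1) (Hirr : @reals.irrational R alpha)
  (Hn : (0 < n)%N) (Hev : ~~ odd n)
  (i : nat) (Hi : (i <= n)%N) (a b : R) (HL : is_L alpha n i a b)
  (x : R) (Hx : a <= x < b) :
  abelian_square (u_n alpha n x) <->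
  ((~~ odd `|Num.floor (n%:R * alpha)|%N /\
      forall y : R, a <= y < b -> 0 <= y < fracp (- (n%:R * alpha)))
   \/
   (odd `|Num.floor (n%:R * alpha)|%N /\
      forall y : R, a <= y < b -> fracp (- (n%:R * alpha)) <= y < 1)).
Proof.
have /andP[xa xb] := Hx.
have hab : a < b by apply: le_lt_trans xb.
have NB := @no_between R alpha n i a b HL hab.
have [[k0 _ [Ea _]] Hb] := HL.
have a0 : 0 <= a by rewrite Ea; have /andP[] := @fracp_itv R (- (k0%:R * alpha)).
have b1 : b <= 1.
  move: Hb; case: eqP => [_ ->|_ [k1 _ [-> _]]]; first by [].
  by have /andP[_ /ltW] := @fracp_itv R (- (k1%:R * alpha)).
have hx : 0 <= x < 1 by apply/andP; split; [exact: le_trans xa | exact: lt_le_trans b1].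
have [m En] : exists m, n = (m + m)%N.
  exists n./2; have := odd_double_half n; rewrite (negbTE Hev) add0n addnn => ->.
  by [].
subst n.
have hm : (0 < m)%N by move: Hn; clear; lia.
set p := fracp (- ((m + m)%N%:R * alpha)).
have NBp : p <= a \/ b <= p := NB (m + m)%N (leqnn _).
have RHS : ((~~ odd `|Num.floor ((m + m)%N%:R * alpha)|%N /\
      forall y : R, a <= y < b -> 0 <= y < p)
   \/
   (odd `|Num.floor ((m + m)%N%:R * alpha)|%N /\
      forall y : R, a <= y < b -> p <= y < 1)) <->
   ((~~ odd `|Num.floor ((m + m)%N%:R * alpha)|%N /\ x < p)
   \/ (odd `|Num.floor ((m + m)%N%:R * alpha)|%N /\ p <= x)).
  split.
  - case=> [[o h]|[o h]]; [left|right]; split=> //.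
      by have /andP[] := h x Hx.
    by have /andP[] := h x Hx.
  - case=> [[o h]|[o h]]; [left|right]; split=> // y /andP[ya yb]; apply/andP; split.
    + exact: le_trans ya.
    + case: NBp => hp; first by exfalso; move: (le_lt_trans hp (le_lt_trans xa h)); rewrite ltxx.
      exact: lt_le_trans hp.
    + case: NBp => hp; first exact: le_trans ya.
      by exfalso; move: (le_lt_trans h (lt_le_trans xb hp)); rewrite ltxx.
    + exact: lt_le_trans b1.
rewrite RHS -(@arith R alpha x m Halpha Hirr hm hx).
set g := fun i => if in_Ib alpha i x then lb else la.
have -> : u_n alpha (m + m) x = mkseq g (m + m) by [].
rewrite (@abelian_squareE _ m); last by rewrite size_mkseq.
have -> : take m (mkseq g (m + m)) = mkseq g m.
  by rewrite /mkseq -map_take take_iota (minn_idPl (leq_addr m m)).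
rewrite -!(@count_un R) //.
split=> [->|]; first by rewrite PoszD.
by rewrite -PoszD => -[].
Qed.
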